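(* Let $(p_{ij})_{i,j\in\{0,1\}}$ be a transition matrix with all $p_{ij}\in(0,1)$ and $p_{ij}\ne\tfrac12$ for some $(i,j)$; for $i\in\{0,1\}$ let $I_n^i\sim B(n,p_{i0})$. Define for $n\ge2$ $$\eta_n^{i,1}=\frac1H\Big(n\log n-\mathbb E\big[I_n^i\log I_n^i+(n-I_n^i)\log(n-I_n^i)\big]\Big)+\pi_{1-i}\frac{H_{1-i}-H_i}{H}n+\frac{H_1-H_0}{(p_{01}+p_{10})H}p_{i0}p_{i1}^{n-1}n,$$ and $\eta_n^{i,2}=n-\eta_n^{i,1}$. Then for both $i\in\{0,1\}$, $\eta_n^{i,2}=O(\log n)$ as $n\to\infty$.
   Context: $0\log0:=0$. $\pi_0=p_{10}/(p_{01}+p_{10})$, $\pi_1=p_{01}/(p_{01}+p_{10})$, $H_i=-\sum_jp_{ij}\log p_{ij}$, $H=\pi_0H_0+\pi_1H_1$. *)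

(* Defs.v *)
(* concrete reals R, natural logarithm (the base cancels in eta). *)
From Stdlib Require Import Reals.
Open Scope R_scope.

Definition xlogx (x : R) : R := if Req_EM_T x 0 then 0 else x * ln x.

(* A 2-state transition matrix p i j, i j in {0,1} (encoded as nat 0,1). *)
Definition pi_ (p : nat -> nat -> R) (i : nat) : R :=
  if Nat.eqb i 0 then p 1%nat 0%nat / (p 0%nat 1%nat + p 1%nat 0%nat)
  else p 0%nat 1%nat / (p 0%nat 1%nat + p 1%nat 0%nat).

Definition Hrow (p : nat -> nat -> R) (i : nat) : R :=
  - (xlogx (p i 0%nat) + xlogx (p i 1%nat)).

Definition Hent (p : nat -> nat -> R) : R :=
  pi_ p 0 * Hrow p 0 + pi_ p 1 * Hrow p 1.

Definition binom_expect (n : nat) (q : R) (f : nat -> R) : R :=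
  sum_f_R0 (fun k => C n k * q ^ k * (1 - q) ^ (n - k) * f k) n.

Definition eta1 (p : nat -> nat -> R) (i n : nat) : R :=
  let H := Hent p in
  (1 / H) * (xlogx (INR n)
     - binom_expect n (p i 0%nat)
         (fun k => xlogx (INR k) + xlogx (INR n - INR k)))
  + pi_ p (1 - i) * (Hrow p (1 - i) - Hrow p i) / H * INR n
  + (Hrow p 1 - Hrow p 0) / ((p 0%nat 1%nat + p 1%nat 0%nat) * H)
      * p i 0%nat * p i 1%nat ^ (n - 1) * INR n.

Definition eta2 (p : nat -> nat -> R) (i n : nat) : R := INR n - eta1 p i n.

(* Main.v *)
Require Import Defs.
From Stdlib Require Import Reals Lra Lia Psatz.
Open Scope R_scope.

Lemma ln_le_sub1 y : 0 < y -> ln y <= y - 1.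
Proof. intros Hy. pose proof (exp_ineq1_le (ln y)). rewrite exp_ln in H; lra. Qed.

Lemma xlogx_eq x : xlogx x = x * ln x.
Proof. unfold xlogx. destruct (Req_EM_T x 0); [subst; ring|reflexivity]. Qed.

Lemma alna a c : 0 <= a -> 0 < c -> a - c <= a * ln a - a * ln c <= a * a / c - a.
Proof.
intros Ha Hc. destruct (Req_dec a 0) as [->|Hn].
- split; [lra| unfold Rdiv; ring_simplify; lra].
- assert (Ha' : 0 < a) by lra.
  pose proof (ln_le_sub1 (a / c)) as H1.
  pose proof (ln_le_sub1 (c / a)) as H2.
  assert (0 < a / c) by (apply Rdiv_lt_0_compat; lra).
  assert (0 < c / a) by (apply Rdiv_lt_0_compat; lra).
  specialize (H1 H). specialize (H2 H0).
  unfold Rdiv in H1, H2.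
  rewrite ln_mult, ln_Rinv in H1 by (try apply Rinv_0_lt_compat; lra).
  rewrite ln_mult, ln_Rinv in H2 by (try apply Rinv_0_lt_compat; lra).
  fold (a / c) in H1. fold (c / a) in H2.
  split.
  + apply Rmult_le_compat_l with (r := a) in H2; [|lra].
    replace (a * (c / a - 1)) with (c - a) in H2 by (field; lra). nra.
  + apply Rmult_le_compat_l with (r := a) in H1; [|lra].
    replace (a * (a / c - 1)) with (a * a / c - a) in H1 by (field; lra). nra.
Qed.

Lemma C_pos n k : 0 < C n k.
Proof. unfold C. apply Rdiv_lt_0_compat; [apply lt_0_INR, Factorial.lt_O_fact|].
apply Rmult_lt_0_compat; apply lt_0_INR, Factorial.lt_O_fact. Qed.

Lemma C_shift m i : (i <= m)%nat -> INR (S i) * C (S m) (S i) = INR (S m) * C m i.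
Proof.
intros Hi. unfold C. replace (S m - S i)%nat with (m - i)%nat by lia.
change (Factorial.fact (S m)) with (S m * Factorial.fact m)%nat.
change (Factorial.fact (S i)) with (S i * Factorial.fact i)%nat.
rewrite !mult_INR. pose proof (INR_fact_neq_0 m). pose proof (INR_fact_neq_0 i).
pose proof (INR_fact_neq_0 (m - i)). pose proof (lt_0_INR (S i) ltac:(lia)).
field. lra.
Qed.

Lemma E_ext n q f g : (forall k, (k <= n)%nat -> f k = g k) ->
  binom_expect n q f = binom_expect n q g.
Proof. intros H. unfold binom_expect. apply sum_eq. intros k Hk. rewrite H; auto. Qed.

Lemma E_plus n q f g : binom_expect n q (fun k => f k + g k) = binom_expect n q f + binom_expect n q g.
Proof. unfold binom_expect. rewrite <- sum_plus. apply sum_eq. intros; ring. Qed.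

Lemma E_scal n q a f : binom_expect n q (fun k => a * f k) = a * binom_expect n q f.
Proof. unfold binom_expect. rewrite scal_sum. apply sum_eq. intros; ring. Qed.

Lemma E_mono n q f g : 0 <= q <= 1 -> (forall k, (k <= n)%nat -> f k <= g k) ->
  binom_expect n q f <= binom_expect n q g.
Proof. intros Hq H. unfold binom_expect. apply sum_Rle. intros k Hk.
apply Rmult_le_compat_l; auto.
pose proof (C_pos n k). apply Rmult_le_pos; [apply Rmult_le_pos|]; try lra;
apply pow_le; lra. Qed.

Lemma E_one n q : binom_expect n q (fun _ => 1) = 1.
Proof. unfold binom_expect. transitivity ((q + (1 - q)) ^ n).
- rewrite binomial. apply sum_eq. intros; ring.
- replace (q + (1 - q)) with 1 by ring. apply pow1. Qed.

Lemma E_shift m q g : binom_expect (S m) q (fun k => INR k * g k) =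
  INR (S m) * q * binom_expect m q (fun j => g (S j)).
Proof.
unfold binom_expect. rewrite decomp_sum by lia. simpl pred.
rewrite Rmult_assoc, scal_sum. simpl INR at 1. rewrite !Rmult_0_l, !Rmult_0_r, Rplus_0_l.
apply sum_eq. intros i Hi.
replace (S m - S i)%nat with (m - i)%nat by lia.
pose proof (C_shift m i Hi). simpl pow.
transitivity ((INR (S i) * C (S m) (S i)) * q * q ^ i * (1 - q) ^ (m - i) * g (S i)); [ring|].
rewrite H. ring.
Qed.

Lemma E_k n q : binom_expect n q (fun k => INR k) = INR n * q.
Proof.
destruct n as [|m].
- unfold binom_expect. simpl. ring.
- rewrite (E_ext _ _ _ (fun k => INR k * 1)) by (intros; ring).
  rewrite E_shift, E_one. ring.
Qed.

Lemma E_k2 m q : binom_expect (S m) q (fun k => INR k * INR k) = INR (S m) * q * (INR m * q + 1).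
Proof.
rewrite E_shift. f_equal.
rewrite (E_ext _ _ _ (fun j => INR j + 1)) by (intros; rewrite S_INR; ring).
rewrite E_plus, E_k, E_one. ring.
Qed.

Lemma E_poly m q a b c : binom_expect (S m) q (fun k => a + b * INR k + c * (INR k * INR k)) =
  a + b * (INR (S m) * q) + c * (INR (S m) * q * (INR m * q + 1)).
Proof.
rewrite E_plus, E_plus, !E_scal, E_k, E_k2.
rewrite (E_ext _ _ _ (fun _ => a * 1)) by (intros; ring). rewrite E_scal, E_one. ring.
Qed.

Lemma pointwise n x q : 0 < n -> 0 <= x <= n -> 0 < q < 1 ->
  let T := n * ln n - (x * ln x + (n - x) * ln (n - x)) in
  let L := - n * ln (1 - q) + (ln (1 - q) - ln q) * x in
  L - ((n / (1 - q) - n) + (- 2 / (1 - q)) * x + (/ (n * q) + / (n * (1 - q))) * (x * x)) <= T <= L.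
Proof.
intros Hn Hx Hq T L.
pose proof (alna x (n * q) ltac:(lra) ltac:(nra)) as [A1 A2].
pose proof (alna (n - x) (n * (1 - q)) ltac:(lra) ltac:(nra)) as [B1 B2].
rewrite ln_mult in A1, A2, B1, B2 by lra.
assert (E1 : x * x / (n * q) - x + (n - x) * (n - x) / (n * (1 - q)) - (n - x)
  = (n / (1 - q) - n) + (- 2 / (1 - q)) * x + (/ (n * q) + / (n * (1 - q))) * (x * x)).
{ field. lra. }
unfold T, L. rewrite <- E1. split; nra.
Qed.

Lemma ent m q : 0 < q < 1 ->
  let n := INR (S m) in
  let h := - (q * ln q + (1 - q) * ln (1 - q)) in
  let X := xlogx n - binom_expect (S m) q (fun k => xlogx (INR k) + xlogx (n - INR k)) in
  n * h - 1 <= X <= n * h.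
Proof.
intros Hq n h X.
assert (Hn : 0 < n) by (apply lt_0_INR; lia).
assert (HX : X = binom_expect (S m) q (fun k => n * ln n - (INR k * ln (INR k) + (n - INR k) * ln (n - INR k)))).
{ unfold X. rewrite (E_ext (S m) q (fun k => n * ln n - (INR k * ln (INR k) + (n - INR k) * ln (n - INR k))) (fun k => (n * ln n) * (fun _ => 1) k + (-1) * (fun k => xlogx (INR k) + xlogx (n - INR k)) k)).
  - rewrite (E_plus _ _ (fun _ => n * ln n * 1) (fun k => -1 * (xlogx (INR k) + xlogx (n - INR k)))).
    rewrite (E_scal (S m) q (n * ln n) (fun _ => 1)), (E_scal (S m) q (-1) (fun k => xlogx (INR k) + xlogx (n - INR k))), E_one, xlogx_eq. ring.
  - intros; simpl; rewrite !xlogx_eq; ring. }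
assert (Hk : forall k, (k <= S m)%nat -> 0 <= INR k <= n).
{ intros k Hk; split; [apply pos_INR| apply le_INR; auto]. }
rewrite HX. split.
- eapply Rle_trans; [|apply E_mono; [lra| intros k Hk'; apply (pointwise n (INR k) q Hn (Hk k Hk') Hq)]].
  rewrite (E_ext _ _ _ (fun k =>
     (- n * ln (1 - q) - (n / (1 - q) - n)) + ((ln (1 - q) - ln q) - (- 2 / (1 - q))) * INR k
     + (- (/ (n * q) + / (n * (1 - q)))) * (INR k * INR k))) by (intros; ring).
  rewrite E_poly. fold n. unfold h.
  assert (INR (S m) = INR m + 1) by apply S_INR. fold n in H.
  replace (INR m) with (n - 1) by lra. apply Req_le. field. lra.
- eapply Rle_trans; [apply E_mono; [lra| intros k Hk'; apply (pointwise n (INR k) q Hn (Hk k Hk') Hq)]|].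
  rewrite (E_ext _ _ _ (fun k =>
     (- n * ln (1 - q)) + (ln (1 - q) - ln q) * INR k + 0 * (INR k * INR k))) by (intros; ring).
  rewrite E_poly. fold n. unfold h. apply Req_le. ring.
Qed.

Lemma pow_le1 x n : 0 <= x <= 1 -> x ^ n <= 1.
Proof. intros Hx. induction n; simpl; [lra|].
assert (0 <= x ^ n) by (apply pow_le; lra). nra. Qed.

Lemma geom_aux p m : 0 < p < 1 -> INR m * p ^ m * (1 - p) <= 1 - p ^ m.
Proof.
intros Hp. induction m.
- simpl. lra.
- rewrite S_INR. simpl pow.
  assert (0 <= p ^ m <= 1) by (split; [apply pow_le; lra| apply pow_le1; lra]).
  assert (A : p * (INR m * p ^ m * (1 - p)) <= p * (1 - p ^ m)) by (apply Rmult_le_compat_l; lra).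
  assert (B : p * p ^ m * (1 - p) <= 1 * (1 - p)) by (apply Rmult_le_compat_r; nra).
  nra.
Qed.

Lemma geom_bound p n : 0 < p < 1 -> INR n * p ^ (n - 1) <= 1 / (1 - p) + 1.
Proof.
intros Hp. pose proof (geom_aux p (n - 1) Hp).
assert (0 <= p ^ (n - 1) <= 1) by (split; [apply pow_le; lra| apply pow_le1; lra]).
destruct n as [|n].
- simpl. assert (0 < 1 / (1 - p)) by (apply Rdiv_lt_0_compat; lra). lra.
- replace (S n - 1)%nat with n in * by lia. rewrite S_INR.
  assert (INR n * p ^ n <= 1 / (1 - p)).
  { apply Rmult_le_reg_r with (1 - p); [lra|]. replace (1 / (1 - p) * (1 - p)) with 1 by (field; lra). lra. }
  lra.
Qed.

Lemma Hrow_pos p i : 0 < p i 0%nat < 1 -> p i 0%nat + p i 1%nat = 1 -> 0 < Hrow p i.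
Proof.
intros Hq Hr. unfold Hrow. rewrite !xlogx_eq.
assert (ln (p i 0%nat) < 0). { rewrite <- ln_1. apply ln_increasing; lra. }
assert (ln (p i 1%nat) < 0). { rewrite <- ln_1. apply ln_increasing; lra. }
nra.
Qed.

Theorem lemma6p5 (p : nat -> nat -> R)
  (hp : forall i j, (i <= 1)%nat -> (j <= 1)%nat -> 0 < p i j < 1)
  (hrow : forall i, (i <= 1)%nat -> p i 0%nat + p i 1%nat = 1)
  (hnh : exists i j, (i <= 1)%nat /\ (j <= 1)%nat /\ p i j <> 1 / 2) :
  forall i, (i <= 1)%nat ->
    exists (K : R) (N : nat), forall n, (N <= n)%nat ->
      Rabs (eta2 p i n) <= K * ln (INR n).
Proof.
intros i Hi.
pose proof (hp 0%nat 0%nat ltac:(lia) ltac:(lia)). pose proof (hp 0%nat 1%nat ltac:(lia) ltac:(lia)).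
pose proof (hp 1%nat 0%nat ltac:(lia) ltac:(lia)). pose proof (hp 1%nat 1%nat ltac:(lia) ltac:(lia)).
pose proof (hrow 0%nat ltac:(lia)). pose proof (hrow 1%nat ltac:(lia)).
pose proof (Hrow_pos p 0 H H3). pose proof (Hrow_pos p 1 H1 H4).
set (s := p 0%nat 1%nat + p 1%nat 0%nat).
assert (Hs : 0 < s) by (unfold s; lra).
assert (HH : 0 < Hent p).
{ unfold Hent, pi_. simpl. fold s.
  assert (0 < p 1%nat 0%nat / s) by (apply Rdiv_lt_0_compat; lra).
  assert (0 < p 0%nat 1%nat / s) by (apply Rdiv_lt_0_compat; lra). nra. }
set (HE := Hent p) in *.
set (q := p i 0%nat). set (r := p i 1%nat).
assert (Hq : 0 < q < 1) by (apply hp; lia).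
assert (Hr : 0 < r < 1) by (apply hp; lia).
assert (Hqr : q + r = 1) by (apply hrow; lia).
set (c0 := (Hrow p 1 - Hrow p 0) / (s * HE)).
assert (Hid : Hrow p i + pi_ p (1 - i) * (Hrow p (1 - i) - Hrow p i) = HE).
{ unfold HE, Hent, pi_. destruct i as [|[|]]; [| |lia]; simpl; unfold s; field; lra. }
assert (Hhi : Hrow p i = - (q * ln q + (1 - q) * ln (1 - q))).
{ unfold Hrow. rewrite !xlogx_eq. fold q r. replace r with (1 - q) by lra. ring. }
set (B := 1 / HE + Rabs c0 * (1 / (1 - r) + 1)).
assert (Hln2 : 0 < ln 2) by (rewrite <- ln_1; apply ln_increasing; lra).
exists (B / ln 2), 2%nat. intros n Hn.
destruct n as [|m]; [lia|].
pose proof (ent m q Hq) as [E1 E2].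
set (X := xlogx (INR (S m)) - binom_expect (S m) q (fun k => xlogx (INR k) + xlogx (INR (S m) - INR k))) in *.
rewrite <- Hhi in E1, E2.
assert (Heta : eta2 p i (S m) = (INR (S m) * Hrow p i - X) / HE - c0 * q * (INR (S m) * r ^ (S m - 1))).
{ unfold eta2, eta1. fold HE s q r X. fold c0.
  set (D := pi_ p (1 - i) * (Hrow p (1 - i) - Hrow p i)) in *. replace (Hrow p i) with (HE - D) by lra. field. lra. }
assert (Hg := geom_bound r (S m) Hr).
assert (0 <= INR (S m) * r ^ (S m - 1)) by (apply Rmult_le_pos; [apply pos_INR| apply pow_le; lra]).
assert (HB : Rabs (eta2 p i (S m)) <= B).
{ rewrite Heta. unfold B.
  eapply Rle_trans; [apply Rabs_triang|]. rewrite Rabs_Ropp.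
  apply Rplus_le_compat.
  - rewrite Rabs_right.
    + unfold Rdiv. apply Rmult_le_compat_r; [left; apply Rinv_0_lt_compat; lra| lra].
    + apply Rle_ge; unfold Rdiv; apply Rmult_le_pos; [lra| left; apply Rinv_0_lt_compat; lra].
  - rewrite !Rabs_mult, (Rabs_right q) by lra.
    rewrite <- Rabs_mult, (Rabs_right (INR (S m) * _)) by lra.
    pose proof (Rabs_pos c0).
    assert (q * (INR (S m) * r ^ (S m - 1)) <= 1 / (1 - r) + 1) by nra.
    rewrite Rmult_assoc. apply Rmult_le_compat_l; lra. }
assert (ln 2 <= ln (INR (S m))).
{ destruct (Nat.eq_dec (S m) 2) as [->|Hne].
  - simpl. replace (1 + 1) with 2 by ring. lra.
  - left. apply ln_increasing; [lra|]. replace 2 with (INR 2) by (simpl; ring). apply lt_INR. lia. }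
assert (0 <= B) by (eapply Rle_trans; [apply Rabs_pos| exact HB]).
eapply Rle_trans; [exact HB|].
replace B with (B / ln 2 * ln 2) at 1 by (field; lra).
apply Rmult_le_compat_l; [unfold Rdiv; apply Rmult_le_pos; [lra| left; apply Rinv_0_lt_compat; lra]| lra].
Qed.
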